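(* Let $\mathcal Q$ be a collection of probability measures on $\{0,1\}^{\mathbb N}$, let $\varepsilon\ge 0$, and let $\mathcal Q_\varepsilon=\{q^1,q^2,\dots\}\subset[0,1]^{\mathbb N}$ be a countable (finite or countably infinite), enumerated set such that for every $q\in\mathrm{Mean}(\mathcal Q)$ there is an index $i$ with $\|q-q^i\|_\infty\le\varepsilon$. For a sample $S=(X^{(1)},\dots,X^{(n)})$, let $\hat q_j=\frac1n\sum_{k=1}^n X^{(k)}_j$ be the empirical mean, and let $\tilde q_n(S)=q^{i}$ where $i$ is the smallest index such that $|q^{i}_j-\hat q_j|\le\sqrt{\tfrac{3\log n}{n}}+\varepsilon$ for all $j\in\{1,\dots,n-1\}$ (the output is undefined if no such index exists). Then for every $\mu\in\mathcal Q$, with $q=\mathrm{Mean}(\mu)$ and $X^{(1)},X^{(2)},\dots$ an i.i.d. sequence with law $\mu$ (with $\tilde q_n$ computed from the first $n$ points), almost surely there exists $n_0$ such that for all $n>n_0$, $\tilde q_n$ is defined and $\|\tilde q_n-q\|_\infty\le\varepsilon$.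
   Context: $\{0,1\}^{\mathbb N}$ carries the product $\sigma$-algebra. For a probability measure $\mu$ on $\{0,1\}^{\mathbb N}$, $\mathrm{Mean}(\mu)\in[0,1]^{\mathbb N}$ is the vector whose $j$-th coordinate is $\mathbb E[X_j]$ for $X\sim\mu$. For a collection $\mathcal Q$ of such measures, $\mathrm{Mean}(\mathcal Q)=\{\mathrm{Mean}(\mu):\mu\in\mathcal Q\}$. Logarithms are natural. *)

(* Defs.v *)
From HB Require Import structures.
From mathcomp Require Import all_boot all_order all_algebra.
From mathcomp Require Import all_classical all_reals all_analysis.
Set Implicit Arguments. Unset Strict Implicit. Unset Printing Implicit Defensive.
Import Order.TTheory GRing.Theory Num.Theory.
Local Open Scope classical_set_scope.
Local Open Scope ring_scope.

Definition coord_gen : set (set (nat -> bool)) :=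
  [set (fun x : nat -> bool => x j) @^-1` B | j in [set: nat] & B in [set: set bool]].

Definition bits_space : Type := g_sigma_algebraType coord_gen.
HB.instance Definition _ := Measurable.on bits_space.

Definition Mean (R : realType) (mu : probability bits_space R) (j : nat) : R :=
  fine (\int[mu]_(x in [set: bits_space]) ((x j : nat)%:R)%:E)%E.

Definition emp_mean (R : realType) (n : nat) (S : nat -> nat -> bool) (j : nat) : R :=
  n%:R^-1 * \sum_(k < n) ((S k j : nat)%:R).

Arguments emp_mean {R} n S j.

(* Acceptance condition of index i: |q^i_j - qhat_j| <= sqrt(3 log n / n) + eps
   for all (paper) coordinates j in {1,...,n-1}, i.e. Rocq coordinates j < n-1. *)
Definition accepts (R : realType) (qs : nat -> nat -> R) (eps : R) (n : nat)
    (S : nat -> nat -> bool) (i : nat) : Prop :=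
  forall j : nat, (j < n.-1)%N ->
    `|qs i j - emp_mean n S j| <= Num.sqrt (3 * ln (n%:R : R) / (n%:R : R)) + eps.

(* tilde q_n(S) = q^i where i is the smallest index of the enumeration I
   satisfying the acceptance condition. [estimator_index ... i] says that
   the estimator is defined and its output is q^i. *)
Definition estimator_index (R : realType) (I : set nat) (qs : nat -> nat -> R)
    (eps : R) (n : nat) (S : nat -> nat -> bool) (i : nat) : Prop :=
  I i /\ accepts qs eps n S i /\
  (forall i' : nat, (i' < i)%N -> I i' -> ~ accepts qs eps n S i').

Definition iid_with_law (R : realType) (d : measure_display) (Omega : measurableType d)
    (P : probability Omega R) (X : nat -> Omega -> bits_space)
    (mu : probability bits_space R) : Prop :=
  (forall k, measurable_fun [set: Omega] (X k)) /\
  forall (s : seq nat) (A : nat -> set bits_space),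
    uniq s -> (forall k, measurable (A k)) ->
    P (\big[setI/setT]_(k <- s) (X k @^-1` A k)) = (\prod_(k <- s) mu (A k))%E.

(* Main.v *)
Require Import Defs.
From HB Require Import structures.
From mathcomp Require Import all_boot all_order all_algebra.
From mathcomp Require Import all_classical all_reals all_analysis.
From mathcomp Require Import ring lra zify.
Import Order.TTheory GRing.Theory Num.Theory.
Local Open Scope classical_set_scope.
Local Open Scope ring_scope.

Definition wp (R : realType) (p : R) (b : bool) : R := if b then p else 1 - p.
Arguments wp {R}.

Section Alg.
Variable R : realType.

Lemma exp_quad (x : R) : -1 <= x -> x <= 1/3 -> expR x <= 1 + x + x ^+ 2.
Proof.
move=> hx1 hx2.
have [xle0|xgt0] := lerP x 0.
  have h1 : 1 - x <= expR (- x) := expR_ge1Dx (- x).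
  have h2 : expR x * expR (- x) = 1 by rewrite -expRD subrr expR0.
  have he : 0 < expR x := expR_gt0 x.
  have h3 : expR x * (1 - x) <= 1.
    by nra.
  nra.
have h1 : 1 - x / 2 <= expR (- (x / 2)) := expR_ge1Dx _.
have h2 : expR (x / 2) * expR (- (x / 2)) = 1 by rewrite -expRD subrr expR0.
have he : 0 < expR (x / 2) := expR_gt0 _.
have h3 : expR (x / 2) * (1 - x / 2) <= 1.
  by nra.
have h4 : expR x = expR (x / 2) ^+ 2.
  by rewrite -expRM_natl; congr expR; rewrite mulrC -mulrA mulVf ?mulr1 // pnatr_eq0.
rewrite h4.
set e := expR (x / 2) in h3 he *.
set y := x / 2 in h3 *.
have hy : x = 2 * y by rewrite /y mulrC -mulrA mulVf ?mulr1 // pnatr_eq0.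
rewrite hy in hx2 xgt0 *.
have hpoly : 1 <= (1 + 2 * y + (2 * y) ^+ 2) * (1 - y) ^+ 2 by nra.
have h5 : (e * (1 - y)) ^+ 2 <= 1.
  rewrite expr_le1 //; apply: mulr_ge0; [exact: ltW| nra].
nra.
Qed.

Lemma mgf_bound (p l : R) : 0 <= p <= 1 -> -(1/3) <= l <= 1/3 ->
  (1 - p) + p * expR l <= expR (l * p + l ^+ 2 / 4).
Proof.
move=> /andP[p0 p1] /andP[l0 l1].
have ha : expR (- (l * p)) <= 1 + - (l * p) + (- (l * p)) ^+ 2.
  apply: exp_quad; nra.
have hb : expR (l * (1 - p)) <= 1 + l * (1 - p) + (l * (1 - p)) ^+ 2.
  apply: exp_quad; nra.
have hc : 1 + l ^+ 2 / 4 <= expR (l ^+ 2 / 4) := expR_ge1Dx _.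
have eq1 : expR (l * p) * expR (- (l * p)) = 1 by rewrite -expRD subrr expR0.
have eq2 : expR (l * p) * expR (l * (1 - p)) = expR l.
  by rewrite -expRD; congr expR; ring.
rewrite expRD.
have he := expR_gt0 (l * p).
have hd : (1 - p) * expR (- (l * p)) + p * expR (l * (1 - p)) <= 1 + l ^+ 2 / 4.
  have t1 : (1 - p) * expR (- (l * p)) <= (1 - p) * (1 + - (l * p) + (- (l * p)) ^+ 2).
    by apply: ler_wpM2l => //; lra.
  have t2 : p * expR (l * (1 - p)) <= p * (1 + l * (1 - p) + (l * (1 - p)) ^+ 2).
    by apply: ler_wpM2l.
  have t3 : l ^+ 2 * (p * (1 - p)) <= l ^+ 2 * (1 / 4).
    have hq : p * (1 - p) <= 1 / 4.
      have := sqr_ge0 (p - 1 / 2); rewrite expr2; lra.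
    by apply: ler_wpM2l; first exact: sqr_ge0.
  nra.
have : expR (l * p) * ((1 - p) * expR (- (l * p)) + p * expR (l * (1 - p)))
   <= expR (l * p) * expR (l ^+ 2 / 4).
  apply: ler_wpM2l; [exact: ltW | exact: le_trans hd hc].
congr (_ <= _).
by rewrite mulrDr mulrCA eq1 mulr1 mulrCA eq2.
Qed.


Lemma chernoff_sum (n : nat) (p l m : R) : 0 <= p <= 1 -> -(1/3) <= l <= 1/3 ->
  \sum_(v : {ffun 'I_n -> bool} | 0 <= l * (\sum_(k < n) ((v k : nat)%:R : R) - m))
     \prod_(k < n) wp p (v k)
  <= expR (- (l * m) + n%:R * (l * p + l ^+ 2 / 4)).
Proof.
move=> hp hl.
have wp0 : forall b, 0 <= wp p b by case: hp => /andP[? ?]; case => /=; lra.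
apply: (@le_trans _ _ (\sum_(v : {ffun 'I_n -> bool})
     (\prod_(k < n) wp p (v k)) * expR (l * (\sum_(k < n) ((v k : nat)%:R : R) - m)))).
  rewrite [leLHS]big_mkcond /=; apply: ler_sum => v _.
  have hprod : 0 <= \prod_(k < n) wp p (v k) by apply: prodr_ge0 => k _.
  case: ifP => hc.
    rewrite -[leLHS]mulr1; apply: ler_wpM2l => //.
    apply: le_trans (expR_ge1Dx _); lra.
  by apply: mulr_ge0 => //; apply: ltW; apply: expR_gt0.
have -> : \sum_(v : {ffun 'I_n -> bool})
     (\prod_(k < n) wp p (v k)) * expR (l * (\sum_(k < n) ((v k : nat)%:R : R) - m))
   = expR (- (l * m)) * \sum_(v : {ffun 'I_n -> bool})
       \prod_(k < n) (wp p (v k) * expR (l * (v k : nat)%:R)).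
  rewrite mulr_sumr; apply: eq_bigr => v _.
  rewrite big_split /= mulrCA; congr (_ * _).
  by rewrite -expR_sum -expRD mulrBr mulr_sumr addrC.
rewrite -(bigA_distr_bigA (fun (k : 'I_n) (b : bool) => wp p b * expR (l * (b : nat)%:R))) /=.
have -> : \sum_(j : bool) wp p j * expR (l * (j : nat)%:R) = (1 - p) + p * expR l.
  by rewrite big_bool /= mulr0 expR0 mulr1 mulr1 addrC.
rewrite prodr_const card_ord expRD.
apply: ler_wpM2l; first exact: ltW (expR_gt0 _).
rewrite expRM_natl; apply: lerXn2r.
- by rewrite nnegrE; case/andP: hp => ? ?; apply: addr_ge0; [lra| apply: mulr_ge0 => //; exact: ltW (expR_gt0 _)].
- by rewrite nnegrE; exact: ltW (expR_gt0 _).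
- exact: mgf_bound.
Qed.
End Alg.

Section Det.
Variable R : realType.

Definition tn (n : nat) : R := Num.sqrt (3 * ln (n%:R : R) / (n%:R : R)).

Lemma tn_ge0 n : 0 <= tn n. Proof. exact: sqrtr_ge0. Qed.

Lemma tn_small (d : R) : 0 < d -> exists N : nat, forall n, (N < n)%N -> tn n < d.
Proof.
move=> d0.
exists (Num.truncn (36 / d ^+ 4)) => n hn.
have n0 : (0 < n)%N by apply: leq_ltn_trans hn.
have nR : (0 : R) < n%:R by rewrite ltr0n.
have hn' : 36 / d ^+ 4 < n%:R.
  apply: lt_le_trans (truncnS_gt _) _; rewrite ler_nat; exact: hn.
have d4 : 0 < d ^+ 4 by apply: exprn_gt0.
have hn2 : 36 < n%:R * d ^+ 4 by rewrite -ltr_pdivrMr.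
set s := Num.sqrt (n%:R : R).
have s0 : 0 < s by rewrite sqrtr_gt0.
have ss : s ^+ 2 = n%:R by rewrite sqr_sqrtr // ltW.
have hL : ln (n%:R : R) < 2 * s.
  rewrite -ss lnXn // mulr2n mulr2n.
  by have := ln_sublinear s0; lra.
have h6 : 6 < d ^+ 2 * s.
  have hsq : 6 ^+ 2 < (d ^+ 2 * s) ^+ 2.
    rewrite exprMn ss -exprM mulrC.
    by have -> : (6 : R) ^+ 2 = 36 by rewrite expr2; lra.
  rewrite -(ltr_pXn2r (_ : (0 < 2)%N)) //; rewrite nnegrE //.
  by apply: mulr_ge0 => //; [apply: sqr_ge0 | apply: ltW].
have hx : 3 * ln (n%:R : R) / n%:R < d ^+ 2.
  rewrite ltr_pdivrMr // -[X in _ < _ * X]ss.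
  have : 3 * ln (n%:R : R) < 6 * s by lra.
  have : 6 * s < d ^+ 2 * s ^+ 2 by rewrite expr2 mulrA ltr_pM2r.
  lra.
have -> : d = Num.sqrt (d ^+ 2) by rewrite sqrtr_sqr ger0_norm // ltW.
rewrite /tn ltr_sqrt //; exact: exprn_gt0.
Qed.

Lemma one_index (I : set nat) (qs : nat -> nat -> R) (eps : R) (p : nat -> R)
    (S : nat -> nat -> bool) (N1 : nat) :
  (forall n, (N1 < n)%N -> forall j, (j < n.-1)%N -> `|emp_mean n S j - p j| <= tn n) ->
  forall i, exists N : nat, forall n, (N < n)%N -> accepts qs eps n S i ->
    forall j, `|qs i j - p j| <= eps.
Proof.
move=> hgood i.
have [good|bad] := pselect (forall j, `|qs i j - p j| <= eps).
  by exists 0%N.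
have [j hj] : exists j, ~ (`|qs i j - p j| <= eps).
  apply: contrapT => h; apply: bad => j; apply: contrapT => hj; apply: h; by exists j.
have hj' : eps < `|qs i j - p j| by rewrite ltNge; apply/negP.
pose dl := (`|qs i j - p j| - eps) / 2.
have dl0 : 0 < dl by rewrite /dl divr_gt0 // subr_gt0.
have [N hN] := tn_small dl dl0.
exists (maxn (maxn N N1) j.+1) => n hn hacc.
exfalso.
have hnN : (N < n)%N by lia.
have hnN1 : (N1 < n)%N by lia.
have hjn : (j < n.-1)%N by lia.
have h1 := hacc j hjn.
have h2 := hgood n hnN1 j hjn.
have h3 := hN n hnN.
have h4 := ler_distD (emp_mean n S j) (qs i j) (p j).
rewrite /dl /tn in h3; rewrite /tn in h2.
lra.
Qed.

Lemma all_index (I : set nat) (qs : nat -> nat -> R) (eps : R) (p : nat -> R)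
    (S : nat -> nat -> bool) (N1 : nat) :
  (forall n, (N1 < n)%N -> forall j, (j < n.-1)%N -> `|emp_mean n S j - p j| <= tn n) ->
  forall m, exists N : nat, forall n, (N < n)%N -> forall i, (i <= m)%N ->
    accepts qs eps n S i -> forall j, `|qs i j - p j| <= eps.
Proof.
move=> hgood; elim => [|m [N hN]].
  have [N hN] := one_index I qs eps p S N1 hgood 0.
  by exists N => n hn i; rewrite leqn0 => /eqP ->; apply: hN.
have [N' hN'] := one_index I qs eps p S N1 hgood m.+1.
exists (maxn N N') => n hn i; rewrite leq_eqVlt => /orP [/eqP -> | him].
  by apply: hN'; lia.
by apply: hN => //; lia.
Qed.

Lemma det_main (I : set nat) (qs : nat -> nat -> R) (eps : R) (p : nat -> R)
    (S : nat -> nat -> bool) (istar : nat) (N1 : nat) :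
  I istar -> (forall j, `|p j - qs istar j| <= eps) ->
  (forall n, (N1 < n)%N -> forall j, (j < n.-1)%N -> `|emp_mean n S j - p j| <= tn n) ->
  exists n0 : nat, forall n : nat, (n0 < n)%N -> exists i : nat,
    estimator_index I qs eps n S i /\ forall j : nat, `|qs i j - p j| <= eps.
Proof.
move=> Ii hstar hgood.
have [N2 hN2] := all_index I qs eps p S N1 hgood istar.
exists (maxn N2 N1) => n hn.
have hacc : accepts qs eps n S istar.
  move=> j hj.
  have h2 := hgood n (leq_ltn_trans (leq_maxr _ _) hn) j hj.
  have h4 := ler_distD (p j) (qs istar j) (emp_mean n S j).
  have h5 := hstar j; rewrite distrC in h5.
  rewrite /tn distrC in h2; lra.
pose P := fun i => `[< I i /\ accepts qs eps n S i >].
have exP : exists i, P i by exists istar; apply/asboolP.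
case: (ex_minnP exP) => i /asboolP [Ii' acc] hmin.
exists i; split.
  split => //; split => // i' hi' Ii2 acc2.
  have := hmin i'; rewrite /P.
  have -> : `[< I i' /\ accepts qs eps n S i' >] = true by apply/asboolP.
  by move=> /(_ isT); rewrite leqNgt hi'.
apply: (hN2 n) => //; first by lia.
have : P istar by apply/asboolP.
by move/hmin.
Qed.
End Det.

Lemma coord_meas (j : nat) (b : bool) :
  measurable [set x : bits_space | x j = b].
Proof.
apply: sub_sigma_algebra.
exists j => //; exists [set b] => //.
Qed.


Lemma bigI_mem (T : Type) (s : seq nat) (F : nat -> set T) w :
  (\big[setI/setT]_(k <- s) F k) w <-> (forall k, k \in s -> F k w).
Proof.
elim: s => [|a s IH]; first by rewrite big_nil; split.
rewrite big_cons; split.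
  move=> [h1 /IH h2] k; rewrite in_cons => /orP [/eqP -> //| ks]; exact: h2.
move=> h; split; first by apply: h; rewrite in_cons eqxx.
by apply/IH => k ks; apply: h; rewrite in_cons ks orbT.
Qed.

Section M.
Variable R : realType.
Variable mu : probability bits_space R.

Lemma mu_val j b : mu [set x : bits_space | x j = b] = (wp (Mean mu j) b)%:E.
Proof.
have mt : mu [set x : bits_space | x j = true] = (Mean mu j)%:E.
  rewrite /Mean.
  have -> : (fun x : bits_space => ((x j : nat)%:R : R)%:E) = (fun x => (\1_[set x : bits_space | x j = true] x)%:E).
    apply: funext => x; rewrite /indic; case E: (x j) => /=.
    - by rewrite mem_set.
    - by rewrite memNset //= E.
  rewrite integral_indic ?setIT; last exact: coord_meas.
  rewrite fineK //.
    rewrite ge0_fin_numE ?measure_ge0 //.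
    apply: (le_lt_trans (probability_le1 _ (coord_meas j true))).
    by rewrite ltey.
  exact: measurableT.
case: b => //=.
have -> : [set x : bits_space | x j = false] = ~` [set x | x j = true].
  by apply: funext => x /=; apply: propext; case: (x j).
by rewrite probability_setC ?mt //; exact: coord_meas.
Qed.

Variables (d : measure_display) (Omega : measurableType d) (P : probability Omega R).
Variable X : nat -> Omega -> bits_space.
Hypothesis hX : iid_with_law P X mu.

Definition Ev n j (v : {ffun 'I_n -> bool}) : set Omega :=
  [set w | forall k : 'I_n, X k w j = v k].

Let Aset n j (v : {ffun 'I_n -> bool}) (k : nat) : set bits_space :=
  [set x | x j = oapp v true (insub k : option 'I_n)].

Lemma Ev_big n j v : Ev n j v = \big[setI/setT]_(k <- index_iota 0 n) (X k @^-1` Aset n j v k).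
Proof.
apply: funext => w; apply: propext; rewrite bigI_mem; split.
  move=> h k; rewrite mem_index_iota => /andP [_ kn].
  by rewrite /Aset /= (insubT (fun k => k < n)%N kn) /=; exact: (h (Ordinal kn)).
move=> h k; have := h (val k); rewrite mem_index_iota ltn_ord /= => /(_ isT).
by rewrite /Aset /= valK.
Qed.

Lemma Aset_meas n j v k : measurable (Aset n j v k).
Proof. exact: coord_meas. Qed.

Lemma Ev_meas n j v : measurable (Ev n j v).
Proof.
rewrite Ev_big; apply: bigsetI_measurable => k _.
have := (hX.1 k) measurableT _ (Aset_meas n j v k).
by rewrite setTI.
Qed.

Lemma P_Ev n j v : P (Ev n j v) = (\prod_(k < n) wp (Mean mu j) (v k))%:E.
Proof.
rewrite Ev_big hX.2; last by move=> k; exact: Aset_meas.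
  rewrite big_mkord -prodEFin; apply: eq_bigr => k _.
  by rewrite /Aset valK /= mu_val.
exact: iota_uniq.
Qed.


Lemma measure_bigU_le (I : Type) (r : seq I) (Pr : pred I) (F : I -> set Omega) :
  (forall i, measurable (F i)) ->
  (P (\big[setU/set0]_(i <- r | Pr i) F i) <= \sum_(i <- r | Pr i) P (F i))%E.
Proof.
move=> mF; elim: r => [|a r IH]; first by rewrite !big_nil measure0.
rewrite !big_cons; case: (Pr a) => //.
apply: le_trans (measureU2 _ _ _) _ => //.
  by apply: bigsetU_measurable => i _.
exact: leeD.
Qed.

Definition Bad n j (t : R) : set Omega :=
  \big[setU/set0]_(v : {ffun 'I_n -> bool} |
      t < `|n%:R^-1 * \sum_(k < n) ((v k : nat)%:R : R) - Mean mu j|) Ev n j v.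

Lemma Bad_meas n j t : measurable (Bad n j t).
Proof. by apply: bigsetU_measurable => v _; exact: Ev_meas. Qed.

Lemma sum_split3 (T : finType) (f : T -> R) (C C1 C2 : pred T) :
  (forall v, 0 <= f v) -> (forall v, C v -> C1 v || C2 v) ->
  \sum_(v | C v) f v <= \sum_(v | C1 v) f v + \sum_(v | C2 v) f v.
Proof.
move=> f0 hC.
rewrite (big_mkcond C) (big_mkcond C1) (big_mkcond C2) -big_split /=.
apply: ler_sum => v _.
case hc: (C v); last by apply: addr_ge0; case: ifP.
move: (hC v hc) => /orP [] ->.
  by rewrite lerDl; case: ifP.
by rewrite lerDr; case: ifP.
Qed.

Lemma P_Bad_le n j (t : R) : (0 < n)%N -> 0 <= t -> t <= 1/6 ->
  (P (Bad n j t) <= (2 * expR (- (n%:R * t ^+ 2)))%:E)%E.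
Proof.
move=> n0 t0 t1.
set p := Mean mu j.
have hp : 0 <= p <= 1.
  have h1 : (0 <= mu [set x : bits_space | x j = true])%E := measure_ge0 _ _.
  have h2 : (mu [set x : bits_space | x j = true] <= 1)%E := probability_le1 mu (coord_meas j true).
  rewrite (mu_val j true) lee_fin in h1; rewrite (mu_val j true) lee_fin in h2.
  by rewrite h1 h2.
rewrite /Bad; apply: le_trans (measure_bigU_le _ _ _ _ (fun v => Ev_meas n j v)) _.
under eq_bigr do rewrite P_Ev -/p.
rewrite sumEFin lee_fin.
have nR : (0 : R) < n%:R by rewrite ltr0n.
pose S (v : {ffun 'I_n -> bool}) := \sum_(k < n) ((v k : nat)%:R : R).
apply: le_trans (@sum_split3 _ _ _ (fun v => 0 <= (2 * t) * (S v - n%:R * (p + t)))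
                            (fun v => 0 <= (- (2 * t)) * (S v - n%:R * (p - t))) _ _) _.
- by move=> v; apply: prodr_ge0 => k _; rewrite /wp; case: (v k); case/andP: hp => ? ?; lra.
- move=> v; rewrite -/(S v) -/p => hv.
  have hS : S v = n%:R * (n%:R^-1 * S v) by rewrite mulrA mulfV ?mulr1 ?mul1r // gt_eqF.
  set s := n%:R^-1 * S v in hv hS.
  rewrite hS.
  have [hs|hs] := lerP p s.
    rewrite ger0_norm ?subr_ge0 // in hv.
    apply/orP; left; rewrite -mulrBr; apply: mulr_ge0; first lra.
    apply: mulr_ge0; [exact: ltW nR | lra].
  rewrite ler0_norm ?subr_le0 ?ltW // in hv.
  apply/orP; right; rewrite -mulrBr mulNr oppr_ge0.
  have : 0 <= 2 * t by lra.
  move=> h2t; apply: mulr_ge0_le0 => //.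
  apply: mulr_ge0_le0; [exact: ltW nR | lra].
have e1 := @chernoff_sum R n p (2 * t) (n%:R * (p + t)) hp.
have e2 := @chernoff_sum R n p (- (2 * t)) (n%:R * (p - t)) hp.
have -> : 2 * expR (- (n%:R * t ^+ 2)) =
          expR (- (2 * t * (n%:R * (p + t))) + n%:R * (2 * t * p + (2 * t) ^+ 2 / 4))
        + expR (- (- (2 * t) * (n%:R * (p - t))) + n%:R * (- (2 * t) * p + (- (2 * t)) ^+ 2 / 4)).
  have hA : - (2 * t * (n%:R * (p + t))) + n%:R * (2 * t * p + (2 * t) ^+ 2 / 4)
      = - (n%:R * t ^+ 2) by field.
  have hB : - (- (2 * t) * (n%:R * (p - t))) + n%:R * (- (2 * t) * p + (- (2 * t)) ^+ 2 / 4)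
      = - (n%:R * t ^+ 2) by field.
  rewrite hA hB; lra.
apply: lerD; [apply: e1 | apply: e2]; lra.
Qed.

Lemma tn_exp n : (0 < n)%N -> expR (- (n%:R * tn R n ^+ 2)) = (n%:R ^+ 3)^-1.
Proof.
move=> n0.
have nR : (0 : R) < n%:R by rewrite ltr0n.
have hl : 0 <= ln (n%:R : R) by apply: ln_ge0; rewrite ler1n.
rewrite /tn sqr_sqrtr; last by apply: divr_ge0; [apply: mulr_ge0 | apply: ltW].
rewrite mulrCA mulfV ?gt_eqF // mulr1 expRN.
by rewrite expRM_natl lnK // posrE.
Qed.

Definition Bn n : set Omega := \big[setU/set0]_(j < n.-1) Bad n j (tn R n).

Lemma Bn_meas n : measurable (Bn n).
Proof. by apply: bigsetU_measurable => j _; exact: Bad_meas. Qed.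

Lemma P_Bn n : (0 < n)%N -> tn R n <= 1/6 -> (P (Bn n) <= (2 / n%:R ^+ 2)%:E)%E.
Proof.
move=> n0 ht.
have nR : (0 : R) < n%:R by rewrite ltr0n.
apply: le_trans (measure_bigU_le _ _ _ _ (fun j : 'I_n.-1 => Bad_meas n j (tn R n))) _.
apply: le_trans (_ : (\sum_(j < n.-1) (2 * (n%:R ^+ 3)^-1)%:E <= _)%E).
  apply: lee_sum => j _; rewrite -tn_exp //; apply: P_Bad_le => //; exact: tn_ge0.
rewrite sumEFin lee_fin sumr_const card_ord.
have h1 : (n.-1%:R : R) <= n%:R by rewrite ler_nat leq_pred.
rewrite -[_ *+ _]mulr_natr.
have k : 2 / n%:R ^+ 3 * n%:R = 2 / n%:R ^+ 2 :> R.
  by field; rewrite gt_eqF.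
rewrite -k; apply: ler_wpM2l => //.
Qed.

Lemma hsum K : \sum_(k < K) (if (1 < k)%N then 2 / (k%:R : R) ^+ 2 else 0) <= 2.
Proof.
have h0 : forall k, 0 <= (if (1 < k)%N then 2 / (k%:R : R) ^+ 2 else 0).
  by move=> k; case: ifP => // _; apply: divr_ge0 => //; apply: exprn_ge0.
have key : forall K', \sum_(k < K'.+2) (if (1 < k)%N then 2 / (k%:R : R) ^+ 2 else 0)
                     <= 2 - 2 / K'.+1%:R.
  elim => [|K' IH].
    by rewrite big_ord_recr big_ord_recr big_ord0 /= add0r addr0 divr1 subrr.
  rewrite big_ord_recr /= .
  apply: le_trans (lerD IH (lexx _)) _.
  have a0 : (0 : R) < K'.+1%:R by rewrite ltr0n.
  have b0 : (0 : R) < K'.+2%:R by rewrite ltr0n.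
  have ab : (K'.+2%:R : R) = K'.+1%:R + 1 by rewrite -natr1.
  rewrite ab in b0 *.
  set a := (K'.+1%:R : R) in a0 ab b0 *.
  rewrite -subr_ge0.
  have -> : 2 - 2 / (a + 1) - (2 - 2 / a + 2 / (a + 1) ^+ 2) = 2 / (a * (a + 1) ^+ 2)
    by field; rewrite !gt_eqF // lra.
  by apply: divr_ge0 => //; apply: mulr_ge0; [exact: ltW | apply: exprn_ge0; lra].
apply: le_trans (_ : \sum_(k < K.+2) (if (1 < k)%N then 2 / (k%:R : R) ^+ 2 else 0) <= _).
  rewrite -!(big_mkord xpredT (fun k => if (1 < k)%N then 2 / (k%:R : R) ^+ 2 else 0)).
  rewrite [in leRHS](big_cat_nat _ (n := K)) //=; last by lia.
  by rewrite lerDl; apply: sumr_ge0 => k _.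
apply: le_trans (key K) _.
rewrite lerBlDr lerDl; apply: divr_ge0 => //.
Qed.

Lemma bigU_in (I : eqType) (r : seq I) (Pr : pred I) (F : I -> set Omega) i w :
  i \in r -> Pr i -> F i w -> (\big[setU/set0]_(i <- r | Pr i) F i) w.
Proof.
elim: r => [//|a r IH]; rewrite in_cons big_cons => /orP [/eqP <- | ir] Pi Fi.
  by rewrite Pi; left.
by case: (Pr a); [right|]; apply: IH.
Qed.

Lemma main_ae (I : set nat) (qs : nat -> nat -> R) (eps : R) (istar : nat) :
  I istar -> (forall j, `|Mean mu j - qs istar j| <= eps) ->
  {ae P, forall w : Omega, exists n0 : nat, forall n : nat, (n0 < n)%N ->
     exists i : nat, estimator_index I qs eps n (fun k => X k w) i /\
       forall j : nat, `|qs i j - Mean mu j| <= eps}.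
Proof.
move=> Ii hstar.
have [N0 hN0] := @tn_small R (1/6 : R) ltac:(lra).
pose N0' := maxn N0 1.
pose F k := if (N0' < k)%N then Bn k else set0.
have mF : forall k, measurable (F k).
  by move=> k; rewrite /F; case: ifP => _; [exact: Bn_meas | exact: measurable0].
have hser : (\sum_(k <oo) P (F k) <= 2%:E)%E.
  apply: lime_le.
    by apply: is_cvg_nneseries => n _ _; exact: measure_ge0.
  apply: nearW => K.
  rewrite big_mkord.
  apply: le_trans (_ : (\sum_(k < K) (if (1 < k)%N then 2 / (k%:R : R) ^+ 2 else 0)%:E <= _)%E).
    apply: lee_sum => k _; rewrite /F.
    case: ifP => hk.
      have -> : (1 < k)%N by lia.
      apply: P_Bn; first by lia.
      by apply: ltW; apply: hN0; lia.
    by rewrite measure0; case: ifP => _ //; rewrite lee_fin; apply: divr_ge0 => //; apply: exprn_ge0.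
  by rewrite sumEFin lee_fin; apply: hsum.
have hlim := @lim_sup_set_cvg0 _ _ _ P F mF (le_lt_trans hser (ltey _)).
exists (lim_sup_set F); split => //.
  rewrite /lim_sup_set; apply: bigcap_measurable => // k _.
  by apply: bigcup_measurable => i _; exact: mF.
move=> w /= nQ; apply: contrapT => nL; apply: nQ.
have [n hn] : exists n, forall k, (n <= k)%N -> ~ F k w.
  apply: contrapT => h; apply: nL => n _.
  apply: contrapT => h2; apply: h; exists n => k hk Fk; apply: h2; exists k => //.
apply: (@det_main R I qs eps (Mean mu) (fun k => X k w) istar (maxn n N0')) => //.
move=> m hm j hj; apply: contrapT => hbad.
apply: (hn m); first by lia.
rewrite /F ifT; last by lia.
apply: (bigU_in _ _ _ _ (Ordinal hj) w); [exact: mem_index_enum | by [] |].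
apply: (bigU_in _ _ _ _ [ffun k : 'I_m => X k w j] w); [exact: mem_index_enum | |].
  rewrite ltNge; apply/negP => hle; apply: hbad.
  move: hle; rewrite /emp_mean.
  suff -> : \sum_(k < m) (([ffun k : 'I_m => X k w j] k : nat)%:R : R) = \sum_(k < m) ((X k w j : nat)%:R) by [].
  by apply: eq_bigr => k _; rewrite ffunE.
by move=> k; rewrite ffunE.
Qed.

End M.

Theorem lemma1 (R : realType) (Q : set (probability bits_space R)) (eps : R)
    (I : set nat) (qs : nat -> nat -> R)
    (heps : 0 <= eps)
    (hI : forall i, I i -> forall j, 0 <= qs i j <= 1)
    (hcover : forall mu, Q mu -> exists2 i, I i & forall j, `|Mean mu j - qs i j| <= eps)
    (d : measure_display) (Omega : measurableType d) (P : probability Omega R)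
    (mu : probability bits_space R) (hmu : Q mu)
    (X : nat -> Omega -> bits_space) (hX : iid_with_law P X mu) :
  {ae P, forall w : Omega, exists n0 : nat, forall n : nat, (n0 < n)%N ->
     exists i : nat, estimator_index I qs eps n (fun k => X k w) i /\
       forall j : nat, `|qs i j - Mean mu j| <= eps}.
Proof.
have [istar Ii hstar] := hcover mu hmu.
exact: (@main_ae R mu d Omega P X hX I qs eps istar Ii hstar).
Qed.
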